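(* There is an absolute constant $C \in \mathbb{N}$ such that for every odd integer $n \ge 1$ there exists a $C$-Lipschitz mapping $\psi\colon\{0,1\}^n\to\{0,1\}^n$ from ${\sf Majority}$ to ${\sf Dictator}$; that is, $\psi$ is a bijection, ${\sf Majority}(z) = \psi(z)_1$ for every $z\in\{0,1\}^n$, and ${\sf dist}(\psi(x),\psi(y)) \le C\,{\sf dist}(x,y)$ for all $x,y\in\{0,1\}^n$.
   Context: ${\sf dist}$ denotes Hamming distance. ${\sf Majority}\colon\{0,1\}^n\to\{0,1\}$ is defined by ${\sf Majority}(x)=1$ if $\sum_{i=1}^n x_i > n/2$ and $0$ otherwise. ${\sf Dictator}(x)=x_1$. Given $f,g\colon\{0,1\}^n\to\{0,1\}$, a mapping from $f$ to $g$ is a bijection $\psi\colon\{0,1\}^n\to\{0,1\}^n$ with $f(z)=g(\psi(z))$ for all $z$. A map $\phi$ is $C$-Lipschitz if ${\sf dist}(\phi(x),\phi(y))\le C\,{\sf dist}(x,y)$ for all $x,y$. *)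

(* Defs.v *)
(* The hypercube {0,1}^n is modelled as n.-tuple bool
   (coordinate i, 1-based in the paper, is index i-1 here). *)
From mathcomp Require Import all_boot.
Set Implicit Arguments. Unset Strict Implicit. Unset Printing Implicit Defensive.

Definition dist (n : nat) (x y : n.-tuple bool) : nat :=
  #|[set i : 'I_n | tnth x i != tnth y i]|.

Definition Majority (n : nat) (x : n.-tuple bool) : bool :=
  n < 2 * count id x.

(* Dictator(x) = x_1 (first coordinate; false is a dummy default for n = 0) *)
Definition Dictator (n : nat) (x : n.-tuple bool) : bool := nth false x 0.

Definition is_mapping (n : nat) (f g : n.-tuple bool -> bool)
  (psi : n.-tuple bool -> n.-tuple bool) : Prop :=
  bijective psi /\ forall z, f z = g (psi z).

Definition Lipschitz (n : nat) (C : nat) (phi : n.-tuple bool -> n.-tuple bool) : Prop :=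
  forall x y, dist (phi x) (phi y) <= C * dist x y.

(* Main.v *)
Require Import Defs.

From mathcomp Require Import all_boot all_order all_algebra zify.
Import Order.TTheory GRing.Theory Num.Theory.
Set Implicit Arguments. Unset Strict Implicit. Unset Printing Implicit Defensive.

Module Aux.

Definition W (y : nat -> bool) (k : nat) : int := (k%:Z - 2 * (count y (iota 0 k))%:Z)%R.

Lemma W_S y k : W y k.+1 = (W y k + (if y k then -1 else 1))%R.
Proof.
rewrite /W -addn1 iotaD count_cat /= addn0.
case: (y k) => /=; lia.
Qed.

Lemma W0 y : W y 0 = 0%R.
Proof. by rewrite /W. Qed.

Lemma W_ext y z k : (forall i, i < k -> y i = z i) -> W y k = W z k.
Proof.
move=> H; rewrite /W; congr (_ - 2 * (Posz _))%R.
apply: eq_in_count => i; rewrite mem_iota add0n => /andP[_ Hi]; exact: H.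
Qed.

Section Walk.
Variable y : nat -> bool.
Variable N : nat.
Local Notation W := (W y).

Fixpoint pmin (k : nat) : int :=
  match k with 0 => 0%R | k'.+1 => if (W k'.+1 < pmin k')%R then W k'.+1 else pmin k' end.

Lemma pmin_le k m : m <= k -> (pmin k <= W m)%R.
Proof.
elim: k m => [|k IH] m.
  by rewrite leqn0 => /eqP ->; rewrite W0.
rewrite leq_eqVlt => /orP[/eqP ->|Hm] /=.
  case: ifP => H; lia.
have := IH m Hm; case: ifP => H; lia.
Qed.

Lemma pmin_att k : exists m, m <= k /\ W m = pmin k.
Proof.
elim: k => [|k [m [Hm HW]]]; first by exists 0; rewrite W0.
rewrite /=; case: ifP => H; first by exists k.+1.
by exists m; split => //; apply: leqW.
Qed.

Fixpoint sminf (d k : nat) : int :=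
  match d with 0 => W k | d'.+1 => if (W k < sminf d' k.+1)%R then W k else sminf d' k.+1 end.

Lemma sminf_le d k m : k <= m <= k + d -> (sminf d k <= W m)%R.
Proof.
elim: d k => [|d IH] k.
  by rewrite addn0 -eqn_leq => /eqP ->.
move=> /andP[H1 H2] /=.
case: (ltngtP k m) H1 => // [Hkm|<-] _.
  have := IH k.+1; rewrite Hkm addSnnS H2 => /(_ isT); case: ifP => H; lia.
case: ifP => H; lia.
Qed.

Lemma sminf_att d k : exists m, k <= m <= k + d /\ W m = sminf d k.
Proof.
elim: d k => [|d IH] k; first by exists k; rewrite addn0 leqnn.
have [m [/andP[H1 H2] HW]] := IH k.+1.
rewrite /=; case: ifP => H.
  by exists k; rewrite leqnn leq_addr.
exists m; split => //; lia.
Qed.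

Definition smin k := sminf (N - k) k.

Lemma smin_le k m : k <= m <= N -> (smin k <= W m)%R.
Proof.
move=> /andP[H1 H2]; apply: sminf_le; rewrite H1 /=; lia.
Qed.

Lemma smin_att k : k <= N -> exists m, k <= m <= N /\ W m = smin k.
Proof.
move=> Hk; have [m [Hm HW]] := sminf_att (N - k) k.
exists m; split => //; move: Hm; lia.
Qed.

Lemma smin_rec k : k < N -> smin k = if (W k < smin k.+1)%R then W k else smin k.+1.
Proof. by move=> Hk; rewrite /smin; have -> : N - k = (N - k.+1).+1 by lia. Qed.

Lemma smin_N : smin N = W N.
Proof. by rewrite /smin subnn. Qed.

Definition C i := all (fun m => W i.+1 < W m)%R (iota 0 i.+1).
Definition O i := all (fun m => W i < W m)%R (iota i.+1 (N - i)).
Definition U i := C i || O i.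

Lemma CP i : reflect (forall m, m <= i -> (W i.+1 < W m)%R) (C i).
Proof.
apply: (iffP allP) => H m Hm; apply: H; rewrite mem_iota /= in Hm * => //; lia.
Qed.

Lemma OP i : i <= N -> reflect (forall m, i < m <= N -> (W i < W m)%R) (O i).
Proof.
move=> HiN; apply: (iffP allP) => H m Hm; apply: H; rewrite mem_iota in Hm * => //; lia.
Qed.

Lemma CE i : C i = (W i.+1 < pmin i)%R.
Proof.
apply/CP/idP => [H|H m Hm].
  by have [m [Hm <-]] := pmin_att i; apply: H.
have := pmin_le Hm; lia.
Qed.

Lemma OE i : i < N -> O i = (W i < smin i.+1)%R.
Proof.
move=> Hi; apply/(OP (ltnW Hi))/idP => [H|H m Hm].
  by have [m [Hm <-]] := smin_att Hi; apply: H; lia.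
have := @smin_le i.+1 m; lia.
Qed.

Lemma C_y i : C i -> y i.
Proof. move/CP => /(_ i (leqnn i)); rewrite W_S; case: (y i) => //; lia. Qed.

Lemma O_y i : i < N -> O i -> ~~ y i.
Proof. move=> Hi /(OP (ltnW Hi)) /(_ i.+1); rewrite W_S ltnSn Hi; case: (y i) => // /(_ isT); lia. Qed.

Lemma countC k : ((count C (iota 0 k))%:Z = - pmin k)%R.
Proof.
elim: k => [|k IH] //.
rewrite -addn1 iotaD count_cat /= addn0 CE addn1 /=.
rewrite add0n; have := W_S y k; have := pmin_le (leqnn k); case: (ltrP (W k.+1) (pmin k)) => H /=; case: (y k); lia.
Qed.

Lemma countO k : k <= N -> ((count O (iota k (N - k)))%:Z = W N - smin k)%R.
Proof.
move=> Hk; move Hd: (N - k) => d; elim: d k Hk Hd => [|d IH] k Hk Hd.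
  have E : k = N by lia.
  by subst k; rewrite smin_N subrr.
have HkN : k < N by lia.
rewrite /= OE // (smin_rec HkN) PoszD IH; [|lia|lia].
have := smin_le (m := k.+1) (k := k.+1); rewrite leqnn HkN => /(_ isT).
rewrite W_S; case: (ltrP (W k) (smin k.+1)) => H /=; case: (y k); lia.
Qed.

Lemma M_facts k : k <= N ->
  [/\ (pmin N <= pmin k)%R, (pmin N <= smin k)%R & (pmin N = pmin k \/ pmin N = smin k)].
Proof.
move=> Hk; split.
- by have [m [Hm <-]] := pmin_att k; apply: pmin_le; lia.
- by have [m [Hm <-]] := smin_att Hk; apply: pmin_le; lia.
have [m [Hm HW]] := pmin_att N.
case: (leqP m k) => Hmk.
  left; have := pmin_le Hmk; have [m' [Hm' <-]] := pmin_att k.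
  have := pmin_le (k := N) (m := m'); lia.
right; have := @smin_le k m; rewrite (ltnW Hmk) Hm => /(_ isT).
have [m' [Hm' <-]] := smin_att Hk; have := pmin_le (k := N) (m := m'); lia.
Qed.

Lemma smin0 : smin 0 = pmin N.
Proof.
have [_ H _] := M_facts (leq0n N).
have [m [Hm HW]] := pmin_att N; have := @smin_le 0 m; rewrite Hm => /(_ isT); lia.
Qed.

Definition S k : int := ((count O (iota 0 k))%:Z - (count C (iota 0 k))%:Z)%R.
Definition H k : int := (W k - S k)%R.

Lemma S_eq k : k <= N -> S k = (smin k - pmin N + pmin k)%R.
Proof.
move=> Hk; rewrite /S countC.
have := countO Hk; have := countO (leq0n N); rewrite smin0 subn0.
have -> : iota 0 N = iota 0 k ++ iota k (N - k) by rewrite -iotaD subnKC.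
rewrite count_cat; lia.
Qed.

Lemma H_ge0 k : k <= N -> (0 <= H k)%R.
Proof.
move=> Hk; rewrite /H S_eq //; have [H1 H2 H3] := M_facts Hk.
have := pmin_le (leqnn k); have := @smin_le k k; rewrite leqnn Hk => /(_ isT); lia.
Qed.

Lemma H_N : H N = 0%R.
Proof.
rewrite /H S_eq // smin_N; have [H1 H2 H3] := M_facts (leqnn N).
have := pmin_le (leqnn N); lia.
Qed.

Lemma H_0 : H 0 = 0%R.
Proof. by rewrite /H /S W0. Qed.

Lemma H_U i : i < N -> U i -> H i = 0%R.
Proof.
move=> Hi HU; rewrite /H S_eq ?(ltnW Hi) //; have [H1 H2 H3] := M_facts (ltnW Hi).
have H5 := pmin_le (leqnn i); have := @smin_le i i; rewrite leqnn (ltnW Hi) => /(_ isT) H4.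
have E : pmin i = W i \/ smin i = W i.
  case/orP: HU => [|].
    rewrite CE => Hc; left; have := W_S y i; case: (y i) => E; rewrite E in Hc; lia.
  rewrite OE // => HH; right; by rewrite (smin_rec Hi) HH.
case: H3 => H3; case: E => E; lia.
Qed.

Lemma CO_disj i : i < N -> ~~ (C i && O i).
Proof. move=> Hi; apply/negP => /andP[/C_y H1 /(O_y Hi)]; by rewrite H1. Qed.

Lemma S_S i : S i.+1 = (S i + (O i)%:Z - (C i)%:Z)%R.
Proof.
rewrite /S -addn1 !iotaD !count_cat /= !addn0 !PoszD add0n.
set a := Posz (count _ _); set b := Posz (count _ _); lia.
Qed.

Lemma H_stepU i : i < N -> U i -> H i.+1 = H i.
Proof.
move=> Hi HU; rewrite /H S_S W_S.
have := CO_disj Hi; move: HU; rewrite /U.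
case HC: (C i); case HO: (O i) => //= _ _.
  rewrite (C_y HC); set w := W i; set s := S i; lia.
rewrite (negbTE (O_y Hi HO)); set w := W i; set s := S i; lia.
Qed.

Lemma H_stepN i : ~~ U i -> H i.+1 = (H i + (if y i then -1 else 1))%R.
Proof.
rewrite /U negb_or => /andP[HC HO].
rewrite /H S_S W_S (negbTE HC) (negbTE HO).
case: (y i); set w := W i; set s := S i; lia.
Qed.

Definition r k := count U (iota 0 k).

Lemma r_S k : r k.+1 = r k + U k.
Proof. by rewrite /r -addn1 iotaD count_cat /= addn0. Qed.

Lemma r_mono m k : m <= k -> r m <= r k.
Proof. move=> Hm; rewrite /r -(subnKC Hm) iotaD count_cat; lia. Qed.

Lemma A1 k rho : k <= N -> rho <= r k -> exists m, [/\ m <= k, r m = rho & H m = 0%R].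
Proof.
elim: k rho => [|k IH] rho Hk.
  by rewrite leqn0 => /eqP ->; exists 0; rewrite H_0.
rewrite r_S; case HU: (U k) => /=.
  rewrite addn1 leq_eqVlt => /orP[/eqP ->|Hr].
    exists k.+1; split => //; first by rewrite r_S HU addn1.
    by rewrite H_stepU // H_U.
  have [m [H1 H2 H3]] := IH rho (ltnW Hk) Hr.
  by exists m; split => //; apply: leqW.
rewrite addn0 => Hr; have [m [H1 H2 H3]] := IH rho (ltnW Hk) Hr.
by exists m; split => //; apply: leqW.
Qed.

Lemma A2 k rho : k <= N -> r k <= rho <= r N ->
  exists m, [/\ k <= m <= N, r m = rho & H m = 0%R].
Proof.
move=> Hk; move Hd: (N - k) => d; elim: d k Hk Hd => [|d IH] k Hk Hd.
  have E : k = N by lia.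
  subst k; rewrite -eqn_leq => /eqP <-; exists N; split => //; first by rewrite leqnn.
  exact: H_N.
move=> /andP[H1 H2]; have HkN : k < N by lia.
case: (leqP (r k.+1) rho) => H3.
  have [m [Hm Hr HH]] := IH k.+1 HkN ltac:(lia) (introT andP (conj H3 H2)).
  by exists m; split => //; lia.
move: H3; rewrite r_S; case HU: (U k) => /= H3; last lia.
exists k; split; [lia|lia|exact: H_U].
Qed.

End Walk.

Definition F (t r : nat) : int := (r%:Z - 2 * (minn r t)%:Z)%R.
Definition Out y N t : nat -> bool := fun i => if U y N i then r y N i < t else y i.

Lemma W_out y N t k : k <= N -> W (Out y N t) k = (H y N k + F t (r y N k))%R.
Proof.
elim: k => [|k IH] Hk.
  by rewrite W0 H_0 /r /F /=; rewrite min0n.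
rewrite W_S IH ?(ltnW Hk) // r_S /Out.
case HU: (U y N k).
  rewrite H_stepU // /F addn1; case: (ltnP (r y N k) t) => Ht; set h := H y N k; lia.
rewrite H_stepN ?HU // addn0; case: (y k); set h := H y N k; set f := F _ _; lia.
Qed.

Lemma F_ge t r : (- (minn r t)%:Z <= F t r)%R.
Proof. rewrite /F; lia. Qed.

Lemma C_out y N t i : t <= r y N N -> i < N ->
  C (Out y N t) i = U y N i && (r y N i < t).
Proof.
move=> Ht Hi; have Wv := @W_out y N t.
apply/CP/idP => [HC|/andP[HU Hr] m Hm].
  apply/negPn/negP => Hn.
  have [m [Hm Hrm HHm]] := @A1 y N i (minn (r y N i) t) (ltnW Hi) (geq_minl _ _).
  have := HC m Hm; rewrite !Wv ?(leq_trans Hm (ltnW Hi)) // HHm Hrm.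
  have -> : F t (minn (r y N i) t) = (- (minn (r y N i) t)%:Z)%R by rewrite /F; lia.
  rewrite r_S; case HU: (U y N i) Hn => /= Hn.
    rewrite H_stepU // H_U // /F; move: Hn; rewrite -leqNgt => Hn; lia.
  rewrite addn0; have := @H_ge0 y N i.+1 Hi; have := F_ge t (r y N i); set h := H _ _ _; set f := F _ _; lia.
rewrite !Wv ?(leq_trans Hm (ltnW Hi)) //.
rewrite r_S HU H_stepU // H_U //.
have := @H_ge0 y N m (leq_trans Hm (ltnW Hi)); have := r_mono y N Hm.
rewrite /F; set h := H _ _ _; lia.
Qed.

Lemma O_out y N t i : t <= r y N N -> i < N ->
  O (Out y N t) N i = U y N i && ~~ (r y N i < t).
Proof.
move=> Ht Hi; have Wv := @W_out y N t.
apply/(OP _ (ltnW Hi))/idP => [HO|/andP[HU Hr] m Hm].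
  apply/negPn/negP => Hn.
  have Hk : i.+1 <= N by [].
  have [m [Hm Hrm HHm]] := @A2 y N i.+1 (maxn (r y N i.+1) t) Hk
      ltac:(apply/andP; split; [exact: leq_maxl| rewrite geq_max Ht (r_mono _ _ Hk)//]).
  have := HO m ltac:(lia); rewrite !Wv ?(ltnW Hi) //; last by lia.
  rewrite HHm Hrm.
  have -> : F t (maxn (r y N i.+1) t) = ((maxn (r y N i.+1) t)%:Z - 2 * t%:Z)%R by rewrite /F; lia.
  move: Hn; rewrite r_S; case HU: (U y N i) => /= Hn.
    rewrite H_U // /F; move: Hn; rewrite -ltnNge => Hn; lia.
  rewrite addn0; have := @H_ge0 y N i (ltnW Hi); rewrite /F; set h := H _ _ _; lia.
have Hm2 : i.+1 <= m by lia.
rewrite !Wv ?(ltnW Hi) //; last by lia.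
rewrite H_U //.
have := @H_ge0 y N m ltac:(lia); have := r_mono y N Hm2; rewrite r_S HU.
move: Hr; rewrite -leqNgt => Hr.
rewrite /F; set h := H _ _ _; lia.
Qed.

Section Ext.
Variables (y z : nat -> bool) (N : nat).
Hypothesis Hyz : forall i, i < N -> y i = z i.

Lemma W_agree k : k <= N -> W y k = W z k.
Proof. move=> Hk; apply: W_ext => i Hi; apply: Hyz; lia. Qed.

Lemma C_agree i : i < N -> C y i = C z i.
Proof.
move=> Hi; rewrite /C W_agree //; apply: eq_in_all => m; rewrite mem_iota => Hm.
by rewrite W_agree //; lia.
Qed.

Lemma O_agree i : i < N -> O y N i = O z N i.
Proof.
move=> Hi; rewrite /O W_agree ?(ltnW Hi) //; apply: eq_in_all => m; rewrite mem_iota => Hm.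
by rewrite W_agree //; lia.
Qed.

Lemma U_agree i : i < N -> U y N i = U z N i.
Proof. by move=> Hi; rewrite /U C_agree // O_agree. Qed.

Lemma r_agree k : k <= N -> r y N k = r z N k.
Proof.
move=> Hk; apply: eq_in_count => i; rewrite mem_iota => Hi; apply: U_agree; lia.
Qed.

Lemma Out_agree t i : i < N -> Out y N t i = Out z N t i.
Proof. by move=> Hi; rewrite /Out U_agree // r_agree ?(ltnW Hi) // Hyz. Qed.

End Ext.

Lemma U_out y N t i : t <= r y N N -> i < N -> U (Out y N t) N i = U y N i.
Proof.
move=> Ht Hi; rewrite [U (Out _ _ _) _ _]/U C_out // O_out //.
by case: (U y N i); case: (r y N i < t).
Qed.

Lemma r_out y N t k : t <= r y N N -> k <= N -> r (Out y N t) N k = r y N k.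
Proof.
move=> Ht Hk; apply: eq_in_count => i; rewrite mem_iota => Hi; apply: U_out => //; lia.
Qed.

Lemma countCU y N t k : count (fun i => U y N i && (r y N i < t)) (iota 0 k) = minn (r y N k) t.
Proof.
elim: k => [|k IH]; first by rewrite /r /= min0n.
rewrite -addn1 iotaD count_cat IH /= addn0 add0n addn1 r_S.
case: (U y N k) => /=; case: ltnP => H; lia.
Qed.

Lemma countC_out y N t : t <= r y N N -> count (C (Out y N t)) (iota 0 N) = t.
Proof.
move=> Ht; rewrite (@eq_in_count _ _ (fun i => U y N i && (r y N i < t))).
  by rewrite countCU; lia.
move=> i; rewrite mem_iota => Hi; apply: C_out => //; lia.
Qed.

Lemma countU y N : count (U y N) (iota 0 N) = count (C y) (iota 0 N) + count (O y N) (iota 0 N).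
Proof.
rewrite -count_predUI.
have -> : count (predI (C y) (O y N)) (iota 0 N) = 0.
  apply/eqP; rewrite -leqn0 leqNgt -has_count; apply/hasP => -[i]; rewrite mem_iota => /andP[_ Hi] /=.
  by apply/negP; apply: CO_disj.
by rewrite addn0.
Qed.

Lemma r_N_eq y N : ((r y N N)%:Z = W y N + 2 * (count (C y) (iota 0 N))%:Z)%R.
Proof.
rewrite /r countU PoszD countC.
have := countO y (leq0n N); rewrite subn0 smin0 => ->.
have := countC y N; lia.
Qed.

Lemma pminN_bounds y N : (pmin y N <= 0)%R /\ (pmin y N <= W y N)%R.
Proof.
split; last exact: pmin_le.
by have := @pmin_le y N 0 (leq0n N); rewrite W0.
Qed.

Lemma C_before_O y N i k : i < N -> C y i -> O y N k -> i < k.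
Proof.
move=> Hi /CP HC HO; rewrite ltnNge; apply/negP => Hk.
have HkN : k <= N by lia.
move/(OP _ HkN): HO => HO.
have [Hki|Hki] : k < i \/ k = i by lia.
  have := HO i.+1 ltac:(lia); have := HC k (ltnW Hki); lia.
subst k; by have := @CO_disj y N i Hi; rewrite (introT (CP y i) HC) /= => /negP; apply; apply/(OP _ HkN).
Qed.

Lemma Out_self y N i : i < N -> Out y N (count (C y) (iota 0 N)) i = y i.
Proof.
move=> Hi; rewrite /Out /U; case HC: (C y i) => /=.
  rewrite (C_y HC); apply/esym.
  have -> : r y N i = count (C y) (iota 0 i).
    rewrite /r /U; apply: eq_in_count => k; rewrite mem_iota => /andP[_ Hk] /=.
    case HO: (O y N k); last by rewrite orbF.
    by have := C_before_O Hi HC HO; lia.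
  have -> : iota 0 N = iota 0 i ++ iota i (N - i) by rewrite -iotaD subnKC // ltnW.
  rewrite count_cat; have -> : N - i = (N - i.+1).+1 by lia.
  by rewrite /= HC; lia.
case HO: (O y N i) => /=; last by [].
rewrite (negbTE (O_y Hi HO)); apply/negbTE; rewrite -leqNgt.
have -> : iota 0 N = iota 0 i ++ iota i (N - i) by rewrite -iotaD subnKC // ltnW.
rewrite count_cat.
have -> : count (C y) (iota i (N - i)) = 0.
  apply/eqP; rewrite -leqn0 leqNgt -has_count; apply/hasP => -[k]; rewrite mem_iota => /andP[H1 H2] HCk.
  by have := @C_before_O y N k i ltac:(lia) HCk HO; lia.
rewrite addn0 /r; apply: sub_count => k /= HCk; by rewrite /U HCk.
Qed.

Lemma Out_Out y N t a i : t <= r y N N -> i < N -> Out (Out y N t) N a i = Out y N a i.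
Proof.
move=> Ht Hi; rewrite {1}/Out U_out // r_out // ?(ltnW Hi) //.
by rewrite /Out; case: (U y N i).
Qed.

Definition hd (f g : nat -> bool) n := count (fun i => f i != g i) (iota 0 n).

Lemma count_window (P : pred nat) (g : nat -> int) (lo : int) (c : nat) (s : seq nat) :
  uniq s -> (forall i, i \in s -> P i -> (lo <= g i < lo + c%:Z)%R) ->
  (forall i i', i \in s -> i' \in s -> P i -> P i' -> g i = g i' -> i = i') ->
  count P s <= c.
Proof.
move=> Us Hw Hinj; rewrite -size_filter.
have Um : uniq (map g (filter P s)).
  rewrite map_inj_in_uniq ?filter_uniq // => i i'; rewrite !mem_filter.
  by move=> /andP[Pi si] /andP[Pi' si']; apply: Hinj.
rewrite -(size_map g) -(size_iota 0 c) -(size_map (fun k : nat => (lo + k%:Z)%R)).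
apply: uniq_leq_size => // x /mapP[i]; rewrite mem_filter => /andP[Pi si] ->.
have /andP[H1 H2] := Hw i si Pi.
apply/mapP; exists (absz (g i - lo)%R); first by rewrite mem_iota; lia.
lia.
Qed.

Lemma count_split3 (P P1 P2 P3 : pred nat) s :
  (forall i, i \in s -> P i -> [|| P1 i, P2 i | P3 i]) ->
  count P s <= count P1 s + count P2 s + count P3 s.
Proof.
elim: s => [|x s IH] //= H.
have := IH (fun i Hi => H i ltac:(by rewrite inE Hi orbT)).
have := H x (mem_head x s).
case: (P x) => /= [/(_ isT)|_]; last lia.
by case: (P1 x); case: (P2 x); case: (P3 x) => //= _; lia.
Qed.

Lemma count_diff (P Q : pred nat) s : count P s <= count Q s + count (fun i => P i != Q i) s.
Proof.
elim: s => [|x s IH] //=; case: (P x); case: (Q x) => /=; lia.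
Qed.

Lemma r_diff y z N k : k <= N ->
  r y N k <= r z N k + hd (U y N) (U z N) N.
Proof.
move=> Hk; apply: (leq_trans (count_diff (U y N) (U z N) (iota 0 k))).
rewrite leq_add2l /hd -(subnKC Hk) iotaD count_cat; lia.
Qed.

Lemma r_inj y N i i' : U y N i -> i < i' -> r y N i < r y N i'.
Proof.
move=> HU Hii'; have := r_mono y N Hii'; rewrite r_S HU; lia.
Qed.

Lemma out_dist y z N t t' :
  hd (Out y N t) (Out z N t') N <=
  3 * hd (U y N) (U z N) N + hd y z N + ((t - t') + (t' - t)).
Proof.
set Ud := hd (U y N) (U z N) N.
pose P3 := fun i => [&& U y N i, U z N i & (r y N i < t) != (r z N i < t')].
apply: (leq_trans (count_split3 (P1 := fun i => U y N i != U z N i)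
          (P2 := fun i => y i != z i) (P3 := P3) _)).
  move=> i _; rewrite /Out /P3.
  by case: (U y N i); case: (U z N i) => //=; case: (y i); case: (z i).
rewrite -/Ud -/(hd y z N).
have -> : count (fun i : nat => U y N i != U z N i) (iota 0 N) = Ud by [].
suff : count P3 (iota 0 N) <= (t - t') + (t' - t) + 2 * Ud by lia.
apply: (@count_window P3 (fun i => ((r y N i)%:Z)%R) ((minn t t')%:Z - Ud%:Z)%R _ _ (iota_uniq 0 N)).
  move=> i; rewrite mem_iota add0n => /andP[_ Hi] /and3P[HUy HUz Hne].
  have H1 := r_diff y z (ltnW Hi).
  have H2 := r_diff z y (ltnW Hi).
  have E : hd (U z N) (U y N) N = Ud.
    by apply: eq_count => k; rewrite eq_sym.
  rewrite E in H2; move: Hne.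
  case: (ltnP (r y N i) t); case: (ltnP (r z N i) t') => //= A B _; lia.
move=> i i' _ _ /and3P[Hi _ _] /and3P[Hi' _ _] /eqP.
rewrite eqz_nat => /eqP E.
case: (ltngtP i i') => // Hlt.
  by have := r_inj Hi Hlt; lia.
by have := r_inj Hi' Hlt; lia.
Qed.

Section Flip.
Variables (y z : nat -> bool) (j : nat).
Hypothesis Hj : z j = ~~ y j.
Hypothesis Hyz : forall i, i != j -> y i = z i.
Definition dl : int := if y j then 2%R else (-2)%R.

Lemma W_shift k : W z k = (W y k + (if (j < k)%N then dl else 0))%R.
Proof.
elim: k => [|k IH]; first by rewrite !W0.
rewrite !W_S IH /dl.
case: (ltngtP j k) => [Hjk|Hkj|<-].
- have -> : j < k.+1 by lia.
  rewrite (Hyz (i := k)); last by apply/eqP; lia.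
  by case: (z k); case: (y j); lia.
- have -> : j < k.+1 = false by lia.
  rewrite (Hyz (i := k)); last by apply/eqP; lia.
  by case: (z k); lia.
- rewrite ltnSn Hj; case: (y j) => /=; lia.
Qed.

Lemma W_shift_lo k : k <= j -> W z k = W y k.
Proof. move=> Hk; rewrite W_shift; have -> : (j < k) = false by lia. by rewrite addr0. Qed.

Lemma W_shift_hi k : j < k -> W z k = (W y k + dl)%R.
Proof. by move=> Hk; rewrite W_shift Hk. Qed.

End Flip.

Lemma pmin_ext y z k : (forall m, m <= k -> W y m = W z m) -> pmin y k = pmin z k.
Proof.
elim: k => [|k IH] H //=.
rewrite IH; last by move=> m Hm; apply: H; lia.
by rewrite H.
Qed.

Lemma sminf_shift y z d k (dd : int) : (forall m, k <= m -> W z m = (W y m + dd)%R) ->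
  sminf z d k = (sminf y d k + dd)%R.
Proof.
elim: d k => [|d IH] k H /=; first by apply: H.
rewrite IH; last by move=> m Hm; apply: H; lia.
rewrite H // ltrD2r; by case: ifP.
Qed.

Lemma C_split w i j : j <= i ->
  C w i = (W w i.+1 < pmin w j)%R && all (fun m => W w i.+1 < W w m)%R (iota j.+1 (i - j)).
Proof.
move=> Hji; apply/CP/andP => [H|[H1 /allP H2] m Hm].
  split; first by have [m [Hm <-]] := pmin_att w j; apply: H; lia.
  by apply/allP => m; rewrite mem_iota => Hm; apply: H; lia.
case: (leqP m j) => Hmj.
  by have := pmin_le w Hmj; lia.
by apply: H2; rewrite mem_iota; lia.
Qed.

Lemma O_split w N i j : i <= j -> j < N ->
  O w N i = all (fun m => W w i < W w m)%R (iota i.+1 (j - i)) && (W w i < smin w N j.+1)%R.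
Proof.
move=> Hij HjN; apply/(@OP w N i (leq_trans Hij (ltnW HjN)))/andP => [H|[/allP H1 H2] m Hm].
  split; first by apply/allP => m; rewrite mem_iota => Hm; apply: H; lia.
  by have [m [Hm <-]] := smin_att w HjN; apply: H; lia.
case: (leqP m j) => Hmj.
  by apply: H1; rewrite mem_iota; lia.
by have := @smin_le w N j.+1 m ltac:(lia); lia.
Qed.

Lemma C_diff y z j N : z j = ~~ y j -> (forall i, i != j -> y i = z i) ->
  hd (C y) (C z) N <= 4.
Proof.
move=> Hj Hyz.
have info : forall i, C y i != C z i ->
   [/\ j <= i, all (fun m => W y i.+1 < W y m)%R (iota j.+1 (i - j)) &
       (pmin y j - 2 <= W y i.+1 < pmin y j - 2 + 4%:Z)%R].
  move=> i Hne; have Hji : j <= i.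
    rewrite leqNgt; apply/negP => Hij; move: Hne; rewrite /C.
    rewrite (W_shift_lo Hj Hyz (k := i.+1)) //.
    rewrite (@eq_in_all _ (fun m => W y i.+1 < W z m)%R (fun m => W y i.+1 < W y m)%R) ?eqxx //.
    by move=> m; rewrite mem_iota => Hm /=; rewrite (W_shift_lo Hj Hyz) //; lia.
  move: Hne; rewrite !(C_split _ Hji).
  rewrite (W_shift_hi Hj Hyz (k := i.+1)) //.
  rewrite -(@pmin_ext y z j); last by move=> m Hm; rewrite (W_shift_lo Hj Hyz).
  rewrite (@eq_in_all _ (fun m => W y i.+1 + dl y j < W z m)%R (fun m => W y i.+1 < W y m)%R); last first.
    by move=> m; rewrite mem_iota => Hm; rewrite (W_shift_hi Hj Hyz) ?ltrD2r //; lia.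
  case: (all _ _); rewrite ?andbF ?andbT // => Hne; split => //.
  move: Hne; rewrite /dl; set X := W y i.+1; set P := pmin y j; case: (y j).
    by case: (ltrP X P) => A; case: (ltrP (X + 2) P) => B //= _; lia.
  by case: (ltrP X P) => A; case: (ltrP (X + -2) P) => B //= _; lia.
apply: (@count_window _ (fun i => W y i.+1) (pmin y j - 2)%R 4 _ (iota_uniq 0 N)).
  by move=> i _ /info[].
move=> i i' _ _ /info[Hi A _] /info[Hi' A' _] E.
case: (ltngtP i i') => // Hlt.
  move/allP: A' => /(_ i.+1); rewrite mem_iota E => /(_ ltac:(lia)); lia.
move/allP: A => /(_ i'.+1); rewrite mem_iota E => /(_ ltac:(lia)); lia.
Qed.

Lemma O_diff y z j N : z j = ~~ y j -> (forall i, i != j -> y i = z i) -> j < N ->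
  hd (O y N) (O z N) N <= 4.
Proof.
move=> Hj Hyz HjN.
have info : forall i, i < N -> O y N i != O z N i ->
   [/\ i <= j, all (fun m => W y i < W y m)%R (iota i.+1 (j - i)) &
       (smin y N j.+1 - 2 <= W y i < smin y N j.+1 - 2 + 4%:Z)%R].
  move=> i HiN Hne; have Hij : i <= j.
    rewrite leqNgt; apply/negP => Hji; move: Hne; rewrite /O.
    rewrite (W_shift_hi Hj Hyz (k := i)) //.
    rewrite (@eq_in_all _ (fun m => W y i + dl y j < W z m)%R (fun m => W y i < W y m)%R) ?eqxx //.
    by move=> m; rewrite mem_iota => Hm /=; rewrite (W_shift_hi Hj Hyz) ?ltrD2r //; lia.
  move: Hne; rewrite !(O_split _ Hij HjN).
  rewrite (W_shift_lo Hj Hyz (k := i)) //.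
  rewrite /smin (@sminf_shift y z _ _ (dl y j)); last by move=> m Hm; rewrite (W_shift_hi Hj Hyz).
  rewrite (@eq_in_all _ (fun m => W y i < W z m)%R (fun m => W y i < W y m)%R); last first.
    by move=> m; rewrite mem_iota => Hm; rewrite (W_shift_lo Hj Hyz) //; lia.
  case: (all _ _); rewrite ?andbF ?andbT //= => Hne; split => //.
  move: Hne; rewrite /dl; set X := W y i; set Q := sminf y (N - j.+1) j.+1; case: (y j).
    by case: (ltrP X Q) => A; case: (ltrP X (Q + 2)) => B //= _; lia.
  by case: (ltrP X Q) => A; case: (ltrP X (Q + -2)) => B //= _; lia.
apply: (@count_window _ (fun i => W y i) (smin y N j.+1 - 2)%R 4 _ (iota_uniq 0 N)).
  by move=> i; rewrite mem_iota add0n => /andP[_ Hi] /(info i Hi)[].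
move=> i i'; rewrite !mem_iota !add0n => /andP[_ Hi] /andP[_ Hi'].
move=> /(info i Hi)[Hij A _] /(info i' Hi')[Hij' A' _] E.
case: (ltngtP i i') => // Hlt.
  move/allP: A => /(_ i'); rewrite mem_iota E => /(_ ltac:(lia)); lia.
move/allP: A' => /(_ i); rewrite mem_iota E => /(_ ltac:(lia)); lia.
Qed.

Lemma U_diff y z j N : z j = ~~ y j -> (forall i, i != j -> y i = z i) -> j < N ->
  hd (U y N) (U z N) N <= 8.
Proof.
move=> Hj Hyz HjN.
have H1 := C_diff N Hj Hyz; have H2 := O_diff Hj Hyz HjN.
have Hs := @count_split3 (fun i => U y N i != U z N i) (fun i => C y i != C z i)
   (fun i => O y N i != O z N i) (fun _ => false) (iota 0 N).
rewrite count_pred0 addn0 in Hs.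
rewrite /hd; apply: leq_trans (Hs _) _.
  move=> i _; rewrite /U; case: (C y i); case: (C z i); case: (O y N i); case: (O z N i) => //.
rewrite /hd in H1 H2; lia.
Qed.

End Aux.
Import Aux.
Lemma distE n (x x' : n.-tuple bool) : dist x x' = count (fun i => nth false x i != nth false x' i) (iota 0 n).
Proof.
rewrite /dist cardsE cardE /enum_mem size_filter -val_enum_ord count_map.
rewrite enumT; apply: eq_count => i /=; by rewrite unfold_in /= !(tnth_nth false).
Qed.

Lemma nth_mk n (f : 'I_n -> bool) i (Hi : i < n) : nth false [tuple f j | j < n] i = f (Ordinal Hi).
Proof. by rewrite -(tnth_nth false _ (Ordinal Hi)) tnth_mktuple. Qed.

Definition tv (s : int) : nat := if (s < 0)%R then (absz s).-1 else absz s.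

Lemma tv_lip (s : int) (s' : int) : tv s - tv s' + (tv s' - tv s) <= `|(s - s')%R|.
Proof. rewrite /tv; case: ifP; case: ifP => A B; lia. Qed.

Definition yx (x : seq bool) : nat -> bool := fun i => nth false x i.+1.
Definition sv n (x : n.-tuple bool) : int := (W (yx x) n.-1 - (nth false x 0)%:Z)%R.
Definition psi n (x : n.-tuple bool) : n.-tuple bool :=
  [tuple if val i == 0 then (sv x < 0)%R else Out (yx x) n.-1 (tv (sv x)) (val i).-1 | i < n].

Lemma nth_psi0 n (x : n.-tuple bool) : 0 < n -> nth false (psi x) 0 = (sv x < 0)%R.
Proof. by move=> Hn; rewrite /psi (nth_mk _ Hn). Qed.

Lemma nth_psiS n (x : n.-tuple bool) i : i.+1 < n ->
  nth false (psi x) i.+1 = Out (yx x) n.-1 (tv (sv x)) i.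
Proof. by move=> Hn; rewrite /psi (nth_mk _ Hn). Qed.

Lemma count_seq (s : seq bool) N : size s = N.+1 ->
  count id s = nth false s 0 + count (yx s) (iota 0 N).
Proof.
case: s => [|b s] //= [Hs]; congr (_ + _).
rewrite /yx /= -{1}(mkseq_nth false s) /mkseq count_map Hs.
by apply: eq_count.
Qed.

Lemma W_yx n (x : n.-tuple bool) : W (yx x) n.-1 = (n.-1%:Z - 2 * (count (yx x) (iota 0 n.-1))%:Z)%R.
Proof. by []. Qed.

Lemma maj_sv n (x : n.-tuple bool) : odd n -> Majority x = (sv x < 0)%R.
Proof.
move=> Hn; rewrite /Majority /sv W_yx.
have Hs : size x = n.-1.+1 by rewrite size_tuple; case: n Hn x.
rewrite (count_seq Hs).
have [k Hk] : exists k, n = (2 * k).+1 by exists n./2; rewrite -{1}(odd_double_half n) Hn; lia.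
have Hp : n.-1 = 2 * k by rewrite Hk.
rewrite Hp; move: (count _ _) => c; case: (nth false x 0) => /=; lia.
Qed.

Lemma tv_le n (x : n.-tuple bool) : tv (sv x) <= r (yx x) n.-1 n.-1.
Proof.
have E := r_N_eq (yx x) n.-1; have := countC (yx x) n.-1.
have [B1 B2] := pminN_bounds (yx x) n.-1.
rewrite /tv /sv; move: E; set w := W _ _; set a := count _ _; set rr := r _ _ _.
case: (nth false x 0) => /=; case: ifP => A; lia.
Qed.

Lemma W_even n (x : n.-tuple bool) : odd n -> exists k, W (yx x) n.-1 = (2 * k)%R.
Proof.
move=> Hn; have [k Hk] : exists k, n = (2 * k).+1 by exists n./2; rewrite -{1}(odd_double_half n) Hn; lia.
exists ((k%:Z) - (count (yx x) (iota 0 n.-1))%:Z)%R; rewrite W_yx.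
have Hp : n.-1 = 2 * k by rewrite Hk.
rewrite Hp; move: (count _ _) => c; lia.
Qed.

Lemma psi_inj n : odd n -> injective (@psi n).
Proof.
move=> Hn x1 x2 E.
have Hn0 : 0 < n by case: n Hn x1 x2 E.
set N := n.-1.
have HnN : n = N.+1 by rewrite /N prednK.
have E0 : (sv x1 < 0)%R = (sv x2 < 0)%R by rewrite -!nth_psi0 // E.
set y1 := yx x1; set y2 := yx x2; set t1 := tv (sv x1); set t2 := tv (sv x2).
have Ht1 : t1 <= r y1 N N := tv_le x1.
have Ht2 : t2 <= r y2 N N := tv_le x2.
have Ev : forall i, i < N -> Out y1 N t1 i = Out y2 N t2 i.
  by move=> i Hi; rewrite -!nth_psiS ?E //; lia.
have Et : t1 = t2.
  rewrite -(countC_out Ht1) -(countC_out Ht2); apply: eq_in_count => i.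
  rewrite mem_iota add0n => /andP[_ Hi]; exact: C_agree Ev _ Hi.
have EU : forall i, i < N -> U y1 N i = U y2 N i.
  move=> i Hi; rewrite -(U_out Ht1 Hi) -(U_out Ht2 Hi); exact: U_agree Ev _ Hi.
have Er : r y1 N N = r y2 N N by apply: eq_in_count => i; rewrite mem_iota add0n => /andP[_ Hi]; apply: EU.
have Es : sv x1 = sv x2.
  move: Et E0; rewrite /t1 /t2 /tv; case: ifP; case: ifP => A B //= C D; lia.
have [k1 Hk1] := W_even x1 Hn; have [k2 Hk2] := W_even x2 Hn.
have Eb : nth false x1 0 = nth false x2 0.
  move: Es; rewrite /sv -/N -/y1 -/y2 Hk1 Hk2; case: (nth false x1 0); case: (nth false x2 0) => //=; lia.
have EW : W y1 N = W y2 N by move: Es; rewrite /sv -/N -/y1 -/y2 Eb; lia.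
have Ea : count (C y1) (iota 0 N) = count (C y2) (iota 0 N).
  have := r_N_eq y1 N; have := r_N_eq y2 N; rewrite Er EW; lia.
have Ey : forall i, i < N -> y1 i = y2 i.
  move=> i Hi; rewrite -(Out_self y1 Hi) -(Out_self y2 Hi) Ea.
  rewrite -(Out_Out _ Ht1 Hi) -(Out_Out _ Ht2 Hi); exact: Out_agree Ev _ _ Hi.
apply: val_inj; apply: (@eq_from_nth _ false); first by rewrite !size_tuple.
move=> i; rewrite size_tuple; case: i => [|i] Hi //.
by apply: Ey; lia.
Qed.

Lemma count_lt (P Q : pred nat) s : (forall i, Q i -> P i) -> (exists2 p, p \in s & P p && ~~ Q p) ->
  count Q s < count P s.
Proof.
move=> HQP [p]; elim: s => [|x s IH] //=; rewrite inE => /orP[/eqP <-|Hp] HPQ.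
  case/andP: HPQ => -> /negbTE ->; rewrite add0n add1n ltnS; apply: sub_count => i; exact: HQP.
have := IH Hp HPQ; case Qx: (Q x); last by lia.
by rewrite (HQP _ Qx); lia.
Qed.

Lemma count_tri (f g h : nat -> bool) s :
  count (fun i => f i != h i) s <= count (fun i => f i != g i) s + count (fun i => g i != h i) s.
Proof. elim: s => [|x s IH] //=; case: (f x); case: (g x); case: (h x) => /=; lia. Qed.

Lemma hd_one y z j N : (forall i, i != j -> y i = z i) -> hd y z N <= 1.
Proof.
move=> Hyz; rewrite /hd; apply: (@leq_trans (count (pred1 j) (iota 0 N))).
  apply: sub_count => i /=; apply: contraTT => Hij; by rewrite negbK Hyz // eqxx.
by rewrite count_uniq_mem ?iota_uniq //; case: (_ \in _).
Qed.

Lemma psi_neighbor n (x x' : n.-tuple bool) p : odd n -> p < n ->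
  (forall i, i != p -> nth false x i = nth false x' i) -> dist (psi x) (psi x') <= 28.
Proof.
move=> Hn Hp Hxx.
have Hn0 : 0 < n by case: n Hn x x' Hxx Hp.
set N := n.-1.
have HnN : n = N.+1 by rewrite /N prednK.
have Ei : iota 0 n = 0 :: iota 1 N by rewrite HnN.
rewrite distE Ei /= nth_psi0 // nth_psi0 //.
set y := yx x; set y' := yx x'; set t := tv (sv x); set t' := tv (sv x').
have -> : count (fun i => nth false (psi x) i != nth false (psi x') i) (iota 1 N) =
          hd (Out y N t) (Out y' N t') N.
  rewrite -(addn0 1) iotaDl count_map; apply: eq_in_count => i; rewrite mem_iota add0n => /andP[_ Hi].
  by rewrite /= add1n !nth_psiS //; lia.
have Hlip := tv_lip (sv x) (sv x').
have Hod := out_dist y y' N t t'.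
move: ((sv x < 0)%R != (sv x' < 0)%R) => bb.
suff [HU [Hh Hs]] : hd (U y N) (U y' N) N <= 8 /\ hd y y' N <= 1 /\ `|(sv x - sv x')%R| <= 2.
  rewrite -/t -/t' in Hlip; case: bb; lia.
case: p Hp Hxx => [|j] Hp Hxx.
  have Eyy : forall i, i < N -> y i = y' i by move=> i _; apply: Hxx.
  have EU : hd (U y N) (U y' N) N = 0.
    apply/eqP; rewrite -leqn0 leqNgt -has_count; apply/hasP => -[i]; rewrite mem_iota add0n => /andP[_ Hi].
    by rewrite (U_agree Eyy Hi) eqxx.
  have Eh : hd y y' N = 0.
    apply/eqP; rewrite -leqn0 leqNgt -has_count; apply/hasP => -[i]; rewrite mem_iota add0n => /andP[_ Hi].
    by rewrite Eyy // eqxx.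
  have EW : W y N = W y' N by apply: W_agree Eyy _ (leqnn N).
  rewrite EU Eh /sv -/N -/y -/y' EW; split => //; split => //.
  by case: (nth false x 0); case: (nth false x' 0) => /=; lia.
have Hyz : forall i, i != j -> y i = y' i by move=> i Hi; apply: Hxx.
have Hb : nth false x 0 = nth false x' 0 by apply: Hxx.
have Hj : j < N by lia.
split; last split; last first.
- case Ej: (y' j == ~~ y j).
    have Hj' : y' j = ~~ y j by apply/eqP.
    have HW := W_shift_hi Hj' Hyz (k := N) Hj.
    rewrite /sv -/N -/y -/y' HW Hb /dl; case: (y j); lia.
  have Eyy : forall i, i < N -> y i = y' i.
    move=> i _; case: (eqVneq i j) => [->|]; last exact: Hyz.
    by move: Ej; case: (y j); case: (y' j).
  have EW : W y N = W y' N by apply: W_agree Eyy _ (leqnn N).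
  by rewrite /sv -/N -/y -/y' EW Hb; lia.
- exact: hd_one N Hyz.
case Ej: (y' j == ~~ y j).
  have Hj' : y' j = ~~ y j by apply/eqP.
  exact: U_diff Hj' Hyz Hj.
have Eyy : forall i, i < N -> y i = y' i.
  move=> i _; case: (eqVneq i j) => [->|]; last exact: Hyz.
  by move: Ej; case: (y j); case: (y' j).
suff -> : hd (U y N) (U y' N) N = 0 by []. apply/eqP; rewrite -leqn0 leqNgt -has_count.
apply/hasP => -[i]; rewrite mem_iota add0n => /andP[_ Hi].
by rewrite (U_agree Eyy Hi) eqxx.
Qed.

Lemma zero_eq n (x x' : n.-tuple bool) :
  count (fun i => nth false x i != nth false x' i) (iota 0 n) = 0 -> x = x'.
Proof.
move=> Hk; apply: val_inj; apply: (@eq_from_nth _ false); first by rewrite !size_tuple.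
move=> i; rewrite size_tuple => Hi; apply/eqP; apply: contraT => Hne.
have : 0 < count (fun i => nth false x i != nth false x' i) (iota 0 n).
  by rewrite -has_count; apply/hasP; exists i => //; rewrite mem_iota.
by rewrite Hk.
Qed.

Lemma dist_tri n (a b c : n.-tuple bool) : dist a c <= dist a b + dist b c.
Proof. rewrite !distE; apply: count_tri. Qed.

Lemma dist0 n (a : n.-tuple bool) : dist a a = 0.
Proof. by rewrite distE (@eq_count _ _ pred0) ?count_pred0 // => i /=; rewrite eqxx. Qed.

Lemma psi_lip_aux n (x' : n.-tuple bool) k : odd n -> forall x : n.-tuple bool,
  count (fun i => nth false x i != nth false x' i) (iota 0 n) <= k ->
  dist (psi x) (psi x') <= 28 * count (fun i => nth false x i != nth false x' i) (iota 0 n).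
Proof.
move=> Hn; elim: k => [|k IH] x Hk.
  have Hz : count (fun i => nth false x i != nth false x' i) (iota 0 n) = 0 by lia.
  by rewrite (zero_eq Hz) dist0.
case: (posnP (count (fun i => nth false x i != nth false x' i) (iota 0 n))) => Hc.
  by rewrite (zero_eq Hc) dist0.
have [p Hp Hne] : exists2 p, p \in iota 0 n & nth false x p != nth false x' p.
  by apply/hasP; rewrite has_count.
move: Hp; rewrite mem_iota add0n => /andP[_ Hp].
pose x'' := [tuple if val i == p then nth false x' p else nth false x (val i) | i < n].
have Hx'' : forall i, i < n -> nth false x'' i = if i == p then nth false x' p else nth false x i.
  by move=> i Hi; rewrite (nth_mk _ Hi).
have Hlt : count (fun i => nth false x'' i != nth false x' i) (iota 0 n) <
           count (fun i => nth false x i != nth false x' i) (iota 0 n).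
  apply: count_lt.
    move=> i; case: (ltnP i n) => Hi.
      rewrite Hx'' //; case: (eqVneq i p) => [->|Hip]; first by rewrite eqxx. by [].
    by rewrite !nth_default ?size_tuple.
  exists p; first by rewrite mem_iota add0n Hp.
  by rewrite Hne /= Hx'' // eqxx /= eqxx.
have Hd := IH x'' ltac:(lia).
have Hnb : dist (psi x) (psi x'') <= 28.
  apply: (psi_neighbor (p := p)) => // i Hip.
  case: (ltnP i n) => Hi; first by rewrite Hx'' // (negbTE Hip).
  by rewrite !nth_default ?size_tuple.
have := dist_tri (psi x) (psi x'') (psi x'); lia.
Qed.

Lemma psi_lip n (x x' : n.-tuple bool) : odd n -> dist (psi x) (psi x') <= 28 * dist x x'.
Proof. by move=> Hn; rewrite [dist x x']distE; apply: psi_lip_aux (leqnn _). Qed.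

Theorem theorem1 :
  exists C : nat, forall n : nat, odd n ->
    exists psi : n.-tuple bool -> n.-tuple bool,
      is_mapping (@Majority n) (@Dictator n) psi /\ Lipschitz C psi.
Proof.
exists 28 => n Hn; exists (@psi n); split; last by move=> x y; apply: psi_lip.
split; first exact: injF_bij (psi_inj Hn).
move=> z; rewrite maj_sv // /Dictator nth_psi0 //; by case: n Hn z.
Qed.
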